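(* Let $N\ge 2$ and $R\ge 3$. For every deterministic online algorithm for routing in the Clos network $C_{N,R}$, there is a sequence of flows, each with demand $1$ (and satisfying the demand assumption below), for which the routing returned by the algorithm has congestion at least $2$.
   Context: Clos network $C_{N,R}$: a directed graph with $N$ middle switches $M_1,\dots,M_N$, $R$ input switches $I_1,\dots,I_R$, $R$ output switches $O_1,\dots,O_R$, source servers $s_i^k$ and destination servers $t_i^k$ ($i\in[R]$, $k\in[N]$), and edges $s_i^kI_i$, $I_iM_m$, $M_mO_i$, $O_it_i^k$ for all $i\in[R]$, $m,k\in[N]$; all links have capacity $1$. A flow $f$ has a source server $s(f)$ of input switch $I_{i(f)}$, a destination server $t(f)$ of output switch $O_{j(f)}$, and a positive demand $\mathrm{dem}(f)$; a set of flows must have total demand at most $1$ leaving each source server and entering each destination server (so with unit demands, at most one flow per source server and per destination server). A routing $r$ assigns each flow a single middle switch $r(f)\in[N]$; its congestion is $\max_{i\in[R],m\in[N]}\max\{\sum_{f:i(f)=i,r(f)=m}\mathrm{dem}(f),\ \sum_{f:j(f)=i,r(f)=m}\mathrm{dem}(f)\}$. A deterministic online algorithm receives flows one at a time and must irrevocably assign each flow a middle switch before seeing the next; formally it defines a routing for every sequence of flows such that for every prefix $P$ of a sequence $F$, the routing of $P$ when given $P$ equals the routing of $P$ when given $F$. *)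

(* Defs.v *)
From mathcomp Require Import all_boot all_order all_algebra.
Set Implicit Arguments. Unset Strict Implicit. Unset Printing Implicit Defensive.
Import Order.TTheory GRing.Theory Num.Theory.
Local Open Scope ring_scope.

(* Clos network C_{N,R}: input switches I_i, output switches O_i (i : 'I_R),
   middle switches M_m (m : 'I_N), source servers s_i^k, destination servers
   t_j^k (k : 'I_N).  Indices are 0-based. *)

(* A flow: source server s_{fin}^{fsrc} (of input switch I_{fin}),
   destination server t_{fout}^{fdst} (of output switch O_{fout}), demand fdem. *)
Record flow (N R : nat) := Flow {
  fin  : 'I_R;  fsrc : 'I_N;
  fout : 'I_R;  fdst : 'I_N;
  fdem : rat }.

(* A routing of a sequence of flows F is a sequence of middle switches,
   the p-th one being the middle switch of the p-th flow of F. *)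

Definition load_in N R (F : seq (flow N R)) (r : seq 'I_N) (i : 'I_R) (m : 'I_N) : rat :=
  \sum_(x <- zip F r | (fin x.1 == i) && (x.2 == m)) fdem x.1.

Definition load_out N R (F : seq (flow N R)) (r : seq 'I_N) (i : 'I_R) (m : 'I_N) : rat :=
  \sum_(x <- zip F r | (fout x.1 == i) && (x.2 == m)) fdem x.1.

Definition congestion N R (F : seq (flow N R)) (r : seq 'I_N) : rat :=
  \big[Num.max/0]_(i : 'I_R) \big[Num.max/0]_(m : 'I_N)
     Num.max (load_in F r i m) (load_out F r i m).

Definition demand_ok N R (F : seq (flow N R)) : Prop :=
  (forall f, f \in map (@fdem N R) F -> 0 < f) /\
  (forall (i : 'I_R) (k : 'I_N),
      \sum_(f <- F | (fin f == i) && (fsrc f == k)) fdem f <= 1) /\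
  (forall (j : 'I_R) (k : 'I_N),
      \sum_(f <- F | (fout f == j) && (fdst f == k)) fdem f <= 1).

Definition online_alg N R (alg : seq (flow N R) -> seq 'I_N) : Prop :=
  (forall F, size (alg F) = size F) /\
  (forall P S, alg P = take (size P) (alg (P ++ S))).

(* Main.v *)
Require Import Defs.
From mathcomp Require Import all_boot all_order all_algebra.
Import Order.TTheory GRing.Theory Num.Theory.
Local Open Scope ring_scope.

Lemma sum_count (T : Type) (s : seq T) (P : pred T) (g : T -> rat) :
  all (fun x => g x == 1) s -> \sum_(x <- s | P x) g x = (count P s)%:R.
Proof.
elim: s => [|x s IH] /=; first by rewrite big_nil.
case/andP => /eqP gx hs; rewrite big_cons IH // natrD.
by case: (P x); rewrite ?gx ?add0r.
Qed.

Lemma all_zip N R (F : seq (flow N R)) (r : seq 'I_N) :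
  all (fun f => fdem f == 1) F -> all (fun x => fdem x.1 == 1) (zip F r).
Proof.
elim: F r => [|f F IH] [|x r] //= /andP [-> h]; exact: IH.
Qed.

Lemma bigmax_ge_seq (I : eqType) (s : seq I) (G : I -> rat) i :
  i \in s -> G i <= \big[Num.max/0]_(j <- s) G j.
Proof.
elim: s => [|x s IH] //=.
rewrite in_cons big_cons; case/orP => [/eqP <-|/IH h].
  by rewrite le_max lexx.
by rewrite le_max h orbT.
Qed.

Lemma bigmax_ge (I : finType) (G : I -> rat) i : G i <= \big[Num.max/0]_(j : I) G j.
Proof. by apply: bigmax_ge_seq; rewrite mem_index_enum. Qed.

Lemma nocong N R (F : seq (flow N R)) (r : seq 'I_N) :
  all (fun f => fdem f == 1) F -> ~~ (2 <= congestion F r) ->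
  forall i m,
  (count (fun x => (fin x.1 == i) && (x.2 == m)) (zip F r) <= 1)%N /\
  (count (fun x => (fout x.1 == i) && (x.2 == m)) (zip F r) <= 1)%N.
Proof.
move=> hF hc i m; rewrite -ltNge in hc.
have H1 : load_in F r i m <= congestion F r.
  rewrite /congestion.
  have := bigmax_ge _ (fun i0 : 'I_R => \big[Num.max/0]_(m0 : 'I_N) Num.max (load_in F r i0 m0) (load_out F r i0 m0)) i.
  apply: le_trans.
  have := bigmax_ge _ (fun m0 : 'I_N => Num.max (load_in F r i m0) (load_out F r i m0)) m.
  apply: le_trans => /=.
  by rewrite le_max lexx.
have H2 : load_out F r i m <= congestion F r.
  rewrite /congestion.
  have := bigmax_ge _ (fun i0 : 'I_R => \big[Num.max/0]_(m0 : 'I_N) Num.max (load_in F r i0 m0) (load_out F r i0 m0)) i.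
  apply: le_trans.
  have := bigmax_ge _ (fun m0 : 'I_N => Num.max (load_in F r i m0) (load_out F r i m0)) m.
  apply: le_trans => /=.
  by rewrite le_max lexx orbT.
have hz := all_zip _ _ _ r hF.
move: H1 H2; rewrite /load_in /load_out !sum_count // => H1 H2.
split; rewrite -ltnS -(ltr_nat rat).
  exact: le_lt_trans H1 hc.
exact: le_lt_trans H2 hc.
Qed.

Lemma zip_cnt N R (kf : flow N R -> 'I_R) (c i : 'I_R) (m : 'I_N) (A : seq (flow N R)) (a : seq 'I_N) :
  size A = size a -> all (fun f => kf f == c) A ->
  count (fun x => (kf x.1 == i) && (x.2 == m)) (zip A a) =
  if c == i then count (pred1 m) a else 0%N.
Proof.
elim: A a => [|f A IH] [|x a] //=; first by case: (c == i).
case=> hs /andP [/eqP hk hA]; rewrite IH //.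
by rewrite hk; case: (c == i).
Qed.

Lemma pig n (a : seq 'I_n.+2) z w : size a = n.+1 ->
  (forall m, count (pred1 m) a + (z == m) <= 1)%N ->
  (forall m, count (pred1 m) a + (w == m) <= 1)%N -> w = z.
Proof.
move=> hs hz hw; apply/eqP; apply/negPn/negP => hwz.
have ua : uniq a.
  apply: count_mem_uniq => x; rewrite -has_pred1 has_count.
  move: (hz x); case: (count (pred1 x) a) => [|[|]] //.
have za : z \notin a.
  rewrite -has_pred1 has_count; move: (hz z); rewrite eqxx addn1 ltnS leqn0 => /eqP ->.
  by [].
have wa : w \notin a.
  rewrite -has_pred1 has_count; move: (hw w); rewrite eqxx addn1 ltnS leqn0 => /eqP ->.
  by [].
have U : uniq [:: w, z & a] by rewrite /= in_cons negb_or hwz wa za ua.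
move/card_uniqP: U; move: (max_card (mem [:: w, z & a])); rewrite card_ord /= hs.
by move=> h e; rewrite e in h; rewrite ltnn in h.
Qed.

Lemma cnt_mk n R (mk : 'I_n.+2 -> flow n.+2 R) (kf : flow n.+2 R -> 'I_R)
   (ks : flow n.+2 R -> 'I_n.+2) (c i : 'I_R) (k : 'I_n.+2) m :
  (m <= n.+2)%N -> (forall x, kf (mk x) = c) -> (forall x, ks (mk x) = x) ->
  count (fun f => (kf f == i) && (ks f == k)) (mkseq (fun j => mk (inord j)) m)
  = ((c == i) && (k < m)%N).
Proof.
move=> hm hc hk; rewrite /mkseq count_map.
rewrite (@eq_in_count _ _ (fun j : nat => (c == i) && (j == val k))); last first.
  move=> j; rewrite mem_iota add0n /= => hj.
  rewrite hc hk; congr (_ && _).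
  apply/eqP/eqP => [<-|->]; first by rewrite inordK // (leq_trans hj hm).
  by rewrite inord_val.
case: (c == i) => /=; last by rewrite count_pred0.
by rewrite (count_uniq_mem _ (iota_uniq 0 m)) mem_iota add0n.
Qed.

Lemma demand_ok_of N R (F : seq (flow N R)) :
  all (fun f => fdem f == 1) F ->
  (forall i k, count (fun f => (fin f == i) && (fsrc f == k)) F <= 1)%N ->
  (forall j k, count (fun f => (fout f == j) && (fdst f == k)) F <= 1)%N ->
  demand_ok F.
Proof.
move=> hF h1 h2; split; [|split].
- move=> x; elim: F hF {h1 h2} => [|f F IH] //= /andP [/eqP hf hF].
  by rewrite in_cons => /orP [/eqP ->|/IH]; [rewrite hf ltr01|apply].
- by move=> i k; rewrite sum_count // lern1.
- by move=> i k; rewrite sum_count // lern1.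
Qed.

From mathcomp Require Import zify.

Lemma ext_alg N R (alg : seq (flow N R) -> seq 'I_N) :
  online_alg alg -> forall P S, exists t, alg (P ++ S) = alg P ++ t /\ size t = size S.
Proof.
case=> hsz hpre P S; exists (drop (size P) (alg (P ++ S))); split.
  by rewrite {1}(hpre P S) cat_take_drop.
by rewrite size_drop hsz size_cat addKn.
Qed.

Theorem mainTheorem5 (N R : nat) (hN : (2 <= N)%N) (hR : (3 <= R)%N)
    (alg : seq (flow N R) -> seq 'I_N) :
  online_alg alg ->
  exists F : seq (flow N R),
    all (fun f => fdem f == 1) F /\ demand_ok F /\
    2 <= congestion F (alg F).
Proof.
move: alg; case: N hN => [|[|n]] // _; case: R hR => [|[|[|q]]] // _ alg halg.
have hsz := halg.1.
pose i0 : 'I_q.+3 := @Ordinal q.+3 0 isT.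
pose i1 : 'I_q.+3 := @Ordinal q.+3 1 isT.
pose i2 : 'I_q.+3 := @Ordinal q.+3 2 isT.
pose mkA := fun x : 'I_n.+2 => Flow i0 x i0 x 1.
pose mkB := fun x : 'I_n.+2 => Flow i1 x i1 x 1.
pose A := mkseq (fun j => mkA (inord j)) n.+1.
pose B := mkseq (fun j => mkB (inord j)) n.+1.
pose f : flow n.+2 q.+3 := Flow i0 ord_max i1 ord_max 1.
pose g : flow n.+2 q.+3 := Flow i2 ord0 i0 ord_max 1.
pose h : flow n.+2 q.+3 := Flow i2 (@Ordinal n.+2 1 isT) i1 ord_max 1.
pose P := A ++ B.
have sA : size A = n.+1 by rewrite size_mkseq.
have sB : size B = n.+1 by rewrite size_mkseq.
pose r := alg P.
have sr : size r = (n.+1 + n.+1)%N by rewrite hsz size_cat sA sB.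
pose a := take n.+1 r. pose b := drop n.+1 r.
have sa : size a = n.+1 by rewrite size_takel // sr leq_addr.
have sb : size b = n.+1 by rewrite size_drop sr addKn.
have er : r = a ++ b by rewrite cat_take_drop.
have [t1 [e1 st1]] := @ext_alg _ _ alg halg P [:: f].
have [t2 [e2 st2]] := @ext_alg _ _ alg halg P [:: g; h].
case: t1 e1 st1 => [|z [|]] // e1 _.
case: t2 e2 st2 => [|w [|v [|]]] // e2 _.
have allA : all (fun f => fdem f == 1) A by rewrite all_map; apply/allP.
have allB : all (fun f => fdem f == 1) B by rewrite all_map; apply/allP.
have all1 : all (fun f => fdem f == 1) (P ++ [:: f]) by rewrite !all_cat allA allB.
have all2 : all (fun f => fdem f == 1) (P ++ [:: g; h]) by rewrite !all_cat allA allB.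
have D1 : demand_ok (P ++ [:: f]).
  apply: demand_ok_of => // i k; rewrite /P -catA !count_cat.
    rewrite (@cnt_mk n _ mkA (@fin _ _) (@fsrc _ _) i0) // (@cnt_mk n _ mkB (@fin _ _) (@fsrc _ _) i1) //=.
    rewrite -!val_eqE /=; lia.
  rewrite (@cnt_mk n _ mkA (@fout _ _) (@fdst _ _) i0) // (@cnt_mk n _ mkB (@fout _ _) (@fdst _ _) i1) //=.
  rewrite -!val_eqE /=; lia.
have D2 : demand_ok (P ++ [:: g; h]).
  apply: demand_ok_of => // i k; rewrite /P -catA !count_cat.
    rewrite (@cnt_mk n _ mkA (@fin _ _) (@fsrc _ _) i0) // (@cnt_mk n _ mkB (@fin _ _) (@fsrc _ _) i1) //=.
    rewrite -!val_eqE /=; lia.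
  rewrite (@cnt_mk n _ mkA (@fout _ _) (@fdst _ _) i0) // (@cnt_mk n _ mkB (@fout _ _) (@fdst _ _) i1) //=.
  rewrite -!val_eqE /=; lia.
case: (boolP (2 <= congestion (P ++ [:: f]) (alg (P ++ [:: f])))) => c1.
  by exists (P ++ [:: f]).
case: (boolP (2 <= congestion (P ++ [:: g; h]) (alg (P ++ [:: g; h])))) => c2.
  by exists (P ++ [:: g; h]).
exfalso.
have N1 := @nocong _ _ _ _ all1 c1; have N2 := @nocong _ _ _ _ all2 c2.
rewrite e1 -/r er /P -!catA in N1; rewrite e2 -/r er /P -!catA in N2.
have fA : all (fun x => fin x == i0) A by rewrite all_map; apply/allP.
have fB : all (fun x => fin x == i1) B by rewrite all_map; apply/allP.
have oA : all (fun x => fout x == i0) A by rewrite all_map; apply/allP.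
have oB : all (fun x => fout x == i1) B by rewrite all_map; apply/allP.
have hz1 : forall m, (count (pred1 m) a + (z == m) <= 1)%N.
  move=> m; have [H _] := N1 i0 m; move: H.
  rewrite !zip_cat ?sA ?sB ?sa ?sb // !count_cat (@zip_cnt _ _ (@fin _ _) i0 i0 m A a) ?sA ?sa //.
  rewrite (@zip_cnt _ _ (@fin _ _) i1 i0 m B b) ?sB ?sb //=.
  by rewrite ?eqxx /= ?add0n ?addn0.
have hz2 : forall m, (count (pred1 m) b + (z == m) <= 1)%N.
  move=> m; have [_ H] := N1 i1 m; move: H.
  rewrite !zip_cat ?sA ?sB ?sa ?sb // !count_cat (@zip_cnt _ _ (@fout _ _) i0 i1 m A a) ?sA ?sa //.
  rewrite (@zip_cnt _ _ (@fout _ _) i1 i1 m B b) ?sB ?sb //=.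
  by rewrite ?eqxx /= ?add0n ?addn0.
have hw : forall m, (count (pred1 m) a + (w == m) <= 1)%N.
  move=> m; have [_ H] := N2 i0 m; move: H.
  rewrite !zip_cat ?sA ?sB ?sa ?sb // !count_cat (@zip_cnt _ _ (@fout _ _) i0 i0 m A a) ?sA ?sa //.
  rewrite (@zip_cnt _ _ (@fout _ _) i1 i0 m B b) ?sB ?sb //=.
  by rewrite ?eqxx /= ?add0n ?addn0.
have hv : forall m, (count (pred1 m) b + (v == m) <= 1)%N.
  move=> m; have [_ H] := N2 i1 m; move: H.
  rewrite !zip_cat ?sA ?sB ?sa ?sb // !count_cat (@zip_cnt _ _ (@fout _ _) i0 i1 m A a) ?sA ?sa //.
  rewrite (@zip_cnt _ _ (@fout _ _) i1 i1 m B b) ?sB ?sb //=.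
  by rewrite ?eqxx /= ?add0n ?addn0.
have ewz := @pig _ _ _ _ sa hz1 hw.
have evz := @pig _ _ _ _ sb hz2 hv.
have [H _] := N2 i2 z; move: H.
rewrite !zip_cat ?sA ?sB ?sa ?sb // !count_cat (@zip_cnt _ _ (@fin _ _) i0 i2 z A a) ?sA ?sa //.
rewrite (@zip_cnt _ _ (@fin _ _) i1 i2 z B b) ?sB ?sb //=.
by rewrite ewz evz eqxx.
Qed.
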